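(* Let $\mathcal X$ be a set of $n\ge3$ items and let $\mathcal C$ be the collection of all subsets of $\mathcal X$ of even size at least 2, so that $d=\sum_{C\in\mathcal C}|C|=n2^{n-2}$. Then the comparison incidence graph $G_{\mathcal C}$ has a cycle decomposition $\sigma$ with $\mu(\sigma)\le5\log_2(n)$ and $\alpha(\sigma)\le5\log_2(n)$.
   Context: $G_{\mathcal C}$ is the bipartite graph with one node per item of $\mathcal X$ and one node per set $C\in\mathcal C$, with an edge between $x$ and $C$ iff $x\in C$. A cycle decomposition $\sigma$ is a partition of the edge set of $G_{\mathcal C}$ into edge-disjoint simple cycles $\sigma_1,\dots,\sigma_{|\sigma|}$; with $|\sigma_i|$ the number of edges of $\sigma_i$, $\mu(\sigma)=d/|\sigma|$ and $\alpha(\sigma)=\frac1d\sum_i|\sigma_i|^2$. *)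

(* Defs.v *)
From mathcomp Require Import all_boot.
From Stdlib Require Import Reals.
Set Implicit Arguments. Unset Strict Implicit. Unset Printing Implicit Defensive.

Definition Csets (n : nat) : {set {set 'I_n}} :=
  [set C : {set 'I_n} | ~~ odd #|C| & 2 <= #|C|].

(* Vertices of the bipartite incidence graph G_C: items (inl) and sets (inr).
   Sets outside Csets are isolated vertices (they are not in the graph). *)
Definition vert (n : nat) := ('I_n + {set 'I_n})%type.

Definition edge (n : nat) := ('I_n * {set 'I_n})%type.

Definition Gedges (n : nat) : {set edge n} :=
  [set e : edge n | (e.2 \in Csets n) && (e.1 \in e.2)].

Definition adj (n : nat) : rel (vert n) := fun u v =>
  match u, v with
  | inl x, inr C => (C \in Csets n) && (x \in C)
  | inr C, inl x => (C \in Csets n) && (x \in C)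
  | _, _ => false
  end.

Definition joins (n : nat) (e : edge n) (u v : vert n) : bool :=
  ((u == inl e.1) && (v == inr e.2)) || ((u == inr e.2) && (v == inl e.1)).

Definition simple_cycle (n : nat) (s : seq (vert n)) : bool :=
  [&& uniq s, 3 <= size s & cycle (@adj n) s].

Definition cycle_edges (n : nat) (s : seq (vert n)) : {set edge n} :=
  [set e : edge n | has (fun v => joins e v (next s v)) s].

Definition clen (n : nat) (s : seq (vert n)) : nat := #|cycle_edges s|.

Definition cycle_decomposition (n : nat) (sigma : seq (seq (vert n))) : Prop :=
  [/\ forall s, s \in sigma -> simple_cycle s,
      forall i j, (i < j < size sigma)%N ->
        [disjoint cycle_edges (nth [::] sigma i) & cycle_edges (nth [::] sigma j)]
    & \bigcup_(s <- sigma) cycle_edges s = Gedges n].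

Definition dtot (n : nat) : nat := \sum_(C in Csets n) #|C|.

Definition mu (n : nat) (sigma : seq (seq (vert n))) : R :=
  (INR (dtot n) / INR (size sigma))%R.

Definition alpha (n : nat) (sigma : seq (seq (vert n))) : R :=
  (/ INR (dtot n) * INR (\sum_(s <- sigma) (clen s) ^ 2))%R.

Definition log2 (x : R) : R := (ln x / ln 2)%R.

(* Main.v *)
Require Import Defs.
From mathcomp Require Import all_boot.
From Stdlib Require Import Reals.
From mathcomp Require Import zify.
From Stdlib Require Import Lra.
Set Implicit Arguments. Unset Strict Implicit. Unset Printing Implicit Defensive.

Definition below n (C : {set 'I_n}) (x : 'I_n) := [set z in C | z < x].
Definition part n (C : {set 'I_n}) (x y : 'I_n) :=
  [&& x \in C, y \in C, x < y, [forall z in C, ~~ ((x < z) && (z < y))]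
    & ~~ odd #|below C x|].
Definition pr n (C : {set 'I_n}) x y := part C x y || part C y x.
Definition pf n (C : {set 'I_n}) x := if [pick y | pr C x y] is Some y then y else x.
Definition tog n (C T : {set 'I_n}) := (C :\: T) :|: (T :\: C).

Lemma in_tog n (C T : {set 'I_n}) z : (z \in tog C T) = (z \in C) (+) (z \in T).
Proof. by rewrite !inE; case: (z \in C); case: (z \in T). Qed.

Lemma togK n (C T : {set 'I_n}) : tog (tog C T) T = C.
Proof. by apply/setP => z; rewrite !in_tog -addbA addbb addbF. Qed.

Lemma card_tog n (S U : {set 'I_n}) : #|tog S U| + (#|S :&: U|).*2 = #|S| + #|U|.
Proof.
have h1 := cardsID U S. have h2 := cardsID S U.
rewrite setIC in h2.
have := cardsU (S :\: U) (U :\: S).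
have -> : (S :\: U) :&: (U :\: S) = set0.
  by apply/setP => z; rewrite !inE; case: (z \in S); case: (z \in U).
rewrite cards0 /tog => h3. rewrite -addnn. lia.
Qed.

Lemma odd_tog n (S U : {set 'I_n}) : odd #|tog S U| = odd #|S| (+) odd #|U|.
Proof. by rewrite -oddD -card_tog oddD odd_double addbF. Qed.

Lemma below_tog n (C T : {set 'I_n}) x : below (tog C T) x = tog (below C x) (below T x).
Proof.
apply/setP => z; rewrite !inE.
by case: (z \in C); case: (z \in T); case: (z < x).
Qed.

Lemma card2_ge n (S : {set 'I_n}) a b : a \in S -> b \in S -> a != b -> 1 < #|S|.
Proof.
move=> aS bS ab.
have : [set a; b] \subset S by apply/subsetP => z; rewrite !inE => /orP[]/eqP->.
by move/subset_leq_card; rewrite cards2 ab.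
Qed.

Lemma below_step n (C : {set 'I_n}) (x y : 'I_n) : y \in C -> y < x ->
  [forall z in C, ~~ ((y < z) && (z < x))] -> #|below C x| = (#|below C y|).+1.
Proof.
move=> yC yx /forall_inP nb.
have -> : below C x = y |: below C y.
  apply/setP => z; rewrite !inE.
  case: (ltngtP z y) => [zy|yz|/val_inj ->]; rewrite ?yC ?yx ?andbT ?orbT //.
  - have zx : z < x by apply: ltn_trans zy yx.
    rewrite zx andbT; have -> // : (z == y) = false.
    by apply/negbTE; apply/eqP => e; rewrite e ltnn in zy.
  - rewrite andbF orbF; have -> : (z == y) = false.
      by apply/negbTE; apply/eqP => e; rewrite e ltnn in yz.
    case zC: (z \in C) => //=; apply/negbTE; have := nb z zC; by rewrite yz.
  - by rewrite eqxx.
rewrite cardsU1 !inE ltnn andbF /=. by [].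
Qed.

Lemma pr_uniq n (C : {set 'I_n}) (x y y' : 'I_n) : pr C x y -> pr C x y' -> y = y'.
Proof.
rewrite /pr.
move=> /orP[|] /and5P[h1 h2 h3 /forall_inP h4 h5] /orP[|] /and5P[g1 g2 g3 /forall_inP g4 g5].
- case: (ltngtP y y') => [yy|yy|/val_inj //].
    by have := g4 y h2; rewrite h3 yy.
  by have := h4 y' g2; rewrite g3 yy.
- have := below_step g1 g3 (introT forall_inP g4).
  by move=> e; rewrite e /= negbK in h5; rewrite h5 in g5.
- have := below_step h1 h3 (introT forall_inP h4).
  by move=> e; rewrite e /= negbK in g5; rewrite g5 in h5.
- case: (ltngtP y y') => [yy|yy|/val_inj //].
    by have := h4 y' g1; rewrite g3 yy.
  by have := g4 y h1; rewrite h3 yy.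
Qed.

Lemma pf_eq n (C : {set 'I_n}) (x y : 'I_n) : pr C x y -> pf C x = y.
Proof.
move=> p; rewrite /pf; case: pickP => [y' p'|/(_ y)]; last by rewrite p.
exact: pr_uniq p' p.
Qed.

Lemma pr_sym n (C : {set 'I_n}) (x y : 'I_n) : pr C x y = pr C y x.
Proof. by rewrite /pr orbC. Qed.

Lemma pr_exists n (C : {set 'I_n}) (x : 'I_n) : C \in Csets n -> x \in C -> exists y, pr C x y.
Proof.
rewrite inE => /andP[evC _] xC.
set A := [set z in C | x < z].
have cardC : #|C| = #|below C x| + (#|A|).+1.
  have := cardsID [set z : 'I_n | z < x] C.
  have -> : C :&: [set z : 'I_n | z < x] = below C x by apply/setP => z; rewrite !inE.
  have -> : C :\: [set z : 'I_n | z < x] = x |: A.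
    apply/setP => z; rewrite !inE.
    case: (ltngtP z x) => [zx|xz|/val_inj ->]; rewrite ?xC ?eqxx //=.
    - have -> : (z == x) = false by apply/negbTE/eqP => e; rewrite e ltnn in zx.
      by case: (z \in C).
    - have -> : (z == x) = false by apply/negbTE/eqP => e; rewrite e ltnn in xz.
      by case: (z \in C).
  rewrite cardsU1 !inE ltnn andbF /= => <-. by [].
case ev: (odd #|below C x|).
- have : 0 < #|below C x| by case: #|below C x| ev.
  case/card_gt0P => z0 z0b.
  case: (arg_maxnP (fun z : 'I_n => val z) z0b) => y yb ymax.
  have : y \in below C x by []. rewrite /below inE => /andP[yC yx].
  have nb : [forall z in C, ~~ ((y < z) && (z < x))].
    apply/forall_inP => z zC; apply/negP => /andP[yz zx].
    have h : z \in below C x by rewrite /below inE zC zx.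
    move: (ymax z h) => h0; have := leq_trans yz h0; by rewrite ltnn.
  exists y; rewrite /pr; apply/orP; right; apply/and5P; split => //.
  by move: ev; rewrite (below_step yC yx nb) /= => ->.
- have : 0 < #|A|.
    case: #|A| cardC => // cC; rewrite cC addn1 /= ev in evC. by [].
  case/card_gt0P => z0 z0A.
  case: (arg_minnP (fun z : 'I_n => val z) z0A) => y yA ymin.
  have : y \in A by []. rewrite inE => /andP[yC xy].
  exists y; rewrite /pr; apply/orP; left; apply/and5P; split => //; last by rewrite ev.
  apply/forall_inP => z zC; apply/negP => /andP[xz zy].
  have h : z \in A by rewrite inE zC xz.
  move: (ymin z h) => h0; have := leq_trans zy h0; by rewrite ltnn.
Qed.

Lemma part_tog n (C T : {set 'I_n}) (a b : 'I_n) : part C a b ->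
  (forall t, t \in T -> (t < a) || (b < t)) -> ~~ odd #|below T a| ->
  part (tog C T) a b.
Proof.
move=> /and5P[aC bC ab /forall_inP nb ev] hT evT.
have aT : a \notin T.
  apply/negP => /hT /orP[]; first by rewrite ltnn.
  by move/(ltn_trans ab); rewrite ltnn.
have bT : b \notin T.
  apply/negP => /hT /orP[]; last by rewrite ltnn.
  by move/(ltn_trans ab); rewrite ltnn.
apply/and5P; split => //.
- by rewrite in_tog aC (negbTE aT).
- by rewrite in_tog bC (negbTE bT).
- apply/forall_inP => z; rewrite in_tog => zt; apply/negP => /andP[az zb].
  case zT: (z \in T).
    move: (hT z zT) => /orP[].
      by move/(ltn_trans az); rewrite ltnn.
    by move/(ltn_trans zb); rewrite ltnn.
  rewrite zT addbF in zt. by have := nb z zt; rewrite az zb.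
- by rewrite below_tog odd_tog (negbTE ev) (negbTE evT).
Qed.

Lemma Csets_tog n (C T : {set 'I_n}) (a b : 'I_n) : C \in Csets n -> ~~ odd #|T| ->
  a \in tog C T -> b \in tog C T -> a != b -> tog C T \in Csets n.
Proof.
move=> CC evT aC bC ab; move: CC; rewrite !inE => /andP[ev _].
by rewrite odd_tog (negbTE ev) (negbTE evT) /= (card2_ge aC bC ab).
Qed.

Lemma part_Csets n (C : {set 'I_n}) (a b : 'I_n) : part C a b -> ~~ odd #|C| -> C \in Csets n.
Proof.
move=> /and5P[aC bC ab _ _] ev; rewrite inE ev /=; apply: (card2_ge aC bC).
by apply/eqP => e; rewrite e ltnn in ab.
Qed.

Lemma eq_inl n (x y : 'I_n) : (inl x == inl y :> vert n) = (x == y).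
Proof. by apply/eqP/eqP => [[]|->]. Qed.
Lemma eq_inr n (x y : {set 'I_n}) : (inr x == inr y :> vert n) = (x == y).
Proof. by apply/eqP/eqP => [[]|->]. Qed.
Lemma eq_lr n (x : 'I_n) y : (inl x == inr y :> vert n) = false.
Proof. by []. Qed.
Lemma eq_rl n (x : 'I_n) y : (inr y == inl x :> vert n) = false.
Proof. by []. Qed.
Lemma joins_lr n (e : edge n) x C : joins e (inl x) (inr C) = (e == (x, C)).
Proof. case: e => x' C'; rewrite /joins /= !eq_inl !eq_inr orbF.
by rewrite xpair_eqE (eq_sym x) (eq_sym C). Qed.
Lemma joins_rl n (e : edge n) x C : joins e (inr C) (inl x) = (e == (x, C)).
Proof. case: e => x' C'; rewrite /joins /= !eq_inl !eq_inr /=.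
by rewrite xpair_eqE andbC (eq_sym x) (eq_sym C). Qed.

Definition q4 n (a b : 'I_n) (D D' : {set 'I_n}) : seq (vert n) :=
  [:: inl a; inr D; inl b; inr D'].

Lemma q4_edges (n : nat) (a b : 'I_n) (D D' : {set 'I_n}) (e : edge n) :
  a != b -> D != D' ->
  (e \in cycle_edges (q4 a b D D')) = (e \in [:: (a,D); (b,D); (b,D'); (a,D')]).
Proof.
move=> ab DD. rewrite /cycle_edges inE /=.
rewrite /next /= !eqxx !eq_inl !eq_inr (eq_sym D') (negbTE DD) (eq_sym b) (negbTE ab).
by rewrite !joins_lr !joins_rl !inE orbF.
Qed.

Lemma q4_simple n (a b : 'I_n) (D D' : {set 'I_n}) :
  a != b -> D != D' -> D \in Csets n -> D' \in Csets n ->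
  a \in D -> b \in D -> a \in D' -> b \in D' -> simple_cycle (q4 a b D D').
Proof.
move=> ab DD H1 H2 H3 H4 H5 H6.
rewrite /simple_cycle /= !in_cons in_nil !eq_inl !eq_inr ?eq_lr ?eq_rl (negbTE ab) (negbTE DD) /=.
by rewrite H1 H2 H3 H4 H5 H6.
Qed.

Definition c4 n (T : {set 'I_n}) (k a b : 'I_n) (C : {set 'I_n}) :=
  let D := if k \in C then tog C T else C in q4 a b D (tog D T).

Lemma c4_tog n (T : {set 'I_n}) (k a b : 'I_n) (C : {set 'I_n}) :
  k \in T -> c4 T k a b (tog C T) = c4 T k a b C.
Proof.
move=> kT; rewrite /c4 in_tog kT.
by case: (k \in C) => /=; rewrite togK.
Qed.

Section C4.
Variables (n : nat) (T : {set 'I_n}) (k a b : 'I_n) (C : {set 'I_n}).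
Hypotheses (kT : k \in T) (P0 : part C a b) (P1 : part (tog C T) a b)
  (E0 : C \in Csets n) (E1 : tog C T \in Csets n).

Let D := if k \in C then tog C T else C.
Let D' := tog D T.

Lemma c4_Csets : D \in Csets n /\ D' \in Csets n.
Proof. by rewrite /D' /D; case: (k \in C); rewrite ?togK. Qed.

Lemma c4_facts : [/\ a != b, D != D', part D a b & part D' a b].
Proof.
have ab : a != b by case/and5P: P0 => _ _ h _ _; apply/eqP => e; rewrite e ltnn in h.
rewrite /D' /D; case kC: (k \in C); rewrite ?togK; split => //.
- apply/negP => /eqP e; have := congr1 (fun S : {set 'I_n} => k \in S) e; rewrite /= !in_tog kC kT.
  by [].
- apply/negP => /eqP e; have := congr1 (fun S : {set 'I_n} => k \in S) e; rewrite /= !in_tog kC kT.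
  by [].
Qed.

Lemma c4_simple : simple_cycle (c4 T k a b C).
Proof.
have [ab DD p0 p1] := c4_facts. have [e0 e1] := c4_Csets.
case/and5P: p0 => h1 h2 _ _ _. case/and5P: p1 => h3 h4 _ _ _.
exact: q4_simple.
Qed.

Lemma c4_edges e : e \in cycle_edges (c4 T k a b C) ->
  exists x' C', [/\ e = (x', C'), (x' == a) || (x' == b) & (C' = C \/ C' = tog C T)].
Proof.
have [ab DD _ _] := c4_facts.
have hD : D = C \/ D = tog C T by rewrite /D; case: (k \in C); [right|left].
have hD' : D' = C \/ D' = tog C T by rewrite /D' /D; case: (k \in C); rewrite ?togK; [left|right].
rewrite /c4 -/D -/D' q4_edges // !inE => /or4P[] /eqP ->.
- by exists a, D; rewrite eqxx.
- by exists b, D; rewrite eqxx orbT.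
- by exists b, D'; rewrite eqxx orbT.
- by exists a, D'; rewrite eqxx.
Qed.

Lemma c4_in x : (x == a) || (x == b) -> (x, C) \in cycle_edges (c4 T k a b C).
Proof.
have [ab DD _ _] := c4_facts.
rewrite /c4 -/D -/D' q4_edges // !inE.
rewrite /D' /D; case: (k \in C); rewrite ?togK;
  by case/orP => /eqP ->; rewrite !eqxx ?orbT.
Qed.

End C4.

Definition o0 m : 'I_m.+3 := ord0.
Definition o1 m : 'I_m.+3 := inord 1.
Definition oA m : 'I_m.+3 := inord m.+1.
Definition oB m : 'I_m.+3 := ord_max.

Lemma val_o0 m : nat_of_ord (o0 m) = 0. Proof. by []. Qed.
Lemma val_o1 m : nat_of_ord (o1 m) = 1. Proof. by rewrite /o1 inordK. Qed.
Lemma val_oA m : nat_of_ord (oA m) = m.+1. Proof. by rewrite /oA inordK. Qed.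
Lemma val_oB m : nat_of_ord (oB m) = m.+2. Proof. by []. Qed.

Definition T1 m := [set oA m; oB m].
Definition T0 m := [set o0 m; o1 m].

Definition six m : seq (vert m.+3) :=
  [:: inl (o0 m); inr [set o0 m; o1 m]; inl (o1 m); inr [set o1 m; oB m];
      inl (oB m); inr [set o0 m; oB m]].
Definition eight m : seq (vert m.+3) :=
  [:: inl (o0 m); inr [set o0 m; oA m]; inl (oA m); inr [set o1 m; oA m];
      inl (o1 m); inr [set o1 m; oB m]; inl (oB m); inr [set o0 m; oB m]].
Definition cycX m := if m == 0 then six m else eight m.

Definition cycab m (a b : 'I_m.+3) (C : {set 'I_m.+3}) :=
  if b < m.+1 then c4 (T1 m) (oB m) a b C
  else if 1 < a then c4 (T0 m) (o0 m) a b C else cycX m.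

Arguments cycab : clear implicits.
Definition cyc m (e : edge m.+3) : seq (vert m.+3) :=
  let y := pf e.2 e.1 in
  if e.1 < y then cycab m e.1 y e.2 else cycab m y e.1 e.2.

Arguments cyc : clear implicits.

Lemma cyc_part m (C : {set 'I_m.+3}) (a b x : 'I_m.+3) :
  part C a b -> (x == a) || (x == b) -> cyc m (x, C) = cycab m a b C.
Proof.
move=> p /orP[]/eqP ->; rewrite /cyc /=.
- have -> : pf C a = b by apply: pf_eq; rewrite /pr p.
  by case/and5P: p => _ _ -> _ _.
- have -> : pf C b = a by apply: pf_eq; rewrite /pr p orbT.
  by case/and5P: p => _ _ h _ _; rewrite ltnNge (ltnW h).
Qed.

Lemma cyc_Gedges m (e : edge m.+3) : e \in Gedges m.+3 ->
  exists a b, [/\ part e.2 a b, (e.1 == a) || (e.1 == b) & cyc m e = cycab m a b e.2].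
Proof.
case: e => x C; rewrite inE /= => /andP[CC xC].
have [y p] := pr_exists CC xC.
case/orP: (p) => q.
- exists x, y; rewrite eqxx; split => //. apply: cyc_part => //; by rewrite eqxx.
- exists y, x; rewrite eqxx orbT; split => //. apply: cyc_part => //. by rewrite eqxx orbT.
Qed.

Lemma oAB m : oA m != oB m.
Proof. apply/eqP => /(congr1 val) /=; rewrite ?val_oA ?val_oB; lia. Qed.
Lemma o01 m : o0 m != o1 m.
Proof. apply/eqP => /(congr1 val) /=; rewrite ?val_o1 ?val_o0; lia. Qed.

Lemma T1_odd m : ~~ odd #|T1 m|.
Proof. by rewrite /T1 cards2 oAB. Qed.
Lemma T0_odd m : ~~ odd #|T0 m|.
Proof. by rewrite /T0 cards2 o01. Qed.

Lemma rule1_part m (C : {set 'I_m.+3}) (a b : 'I_m.+3) :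
  b < m.+1 -> part C a b -> part (tog C (T1 m)) a b.
Proof.
move=> bm p; have ab : a < b by case/and5P: p.
apply: part_tog => //.
  move=> t; rewrite !inE => /orP[]/eqP ->; rewrite ?val_oA ?val_oB.
  - by rewrite bm orbT.
  - by rewrite (ltn_trans bm) ?orbT.
have -> : below (T1 m) a = set0.
  apply/setP => t; rewrite !inE; apply/negbTE; apply/negP => /andP[/orP[]/eqP -> ].
  - rewrite val_oA => h; have := ltn_trans h (ltn_trans ab bm); by rewrite ltnn.
  - rewrite val_oB => h; have := ltn_trans h (ltn_trans ab bm). lia.
by rewrite cards0.
Qed.

Lemma rule0_part m (C : {set 'I_m.+3}) (a b : 'I_m.+3) :
  1 < a -> part C a b -> part (tog C (T0 m)) a b.
Proof.
move=> a1 p; have ab : a < b by case/and5P: p.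
apply: part_tog => //.
  move=> t; rewrite !inE => /orP[]/eqP ->; rewrite ?val_o0 ?val_o1.
  - by rewrite (ltn_trans _ a1).
  - by rewrite a1.
have -> : below (T0 m) a = T0 m.
  apply/setP => t; rewrite !inE; case/orP: (orbN ((t == o0 m) || (t == o1 m))) => [h|h].
    rewrite h /=; case/orP: h => /eqP ->; rewrite ?val_o0 ?val_o1 //. exact: ltn_trans a1.
  by rewrite (negbTE h).
exact: T0_odd.
Qed.

Lemma exc_set m (C : {set 'I_m.+3}) (a b : 'I_m.+3) :
  part C a b -> ~~ odd #|C| -> a <= 1 -> m.+1 <= b -> C = [set a; b].
Proof.
move=> p evC a1 bm; case/and5P: p => aC bC ab /forall_inP nb ev.
have ab' : a != b by apply/eqP => e; rewrite e ltnn in ab.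
have hb : below C a = set0.
  have : #|below C a| <= 1.
    rewrite -(cards1 (o0 m)); apply: subset_leq_card; apply/subsetP => t.
    rewrite !inE => /andP[_ ta]; apply/eqP/val_inj => /=; lia.
  case: #|below C a| ev (cards_eq0 (below C a)) => [_ /esym/eqP //|[|//]] //.
have sub3 : forall z, z \in C -> [|| z == a, z == b | z == oB m].
  move=> z zC; case: (ltngtP z a) => [za|az|/val_inj ->]; last by rewrite eqxx.
    have : z \in below C a by rewrite inE zC za.
    by rewrite hb inE.
  case: (ltngtP z b) => [zb|bz|/val_inj ->]; last by rewrite eqxx orbT.
    by have := nb z zC; rewrite az zb.
  have : nat_of_ord z = m.+2 by have := ltn_ord z; lia.
  by move=> h; rewrite (_ : z == oB m) ?orbT //; apply/eqP/val_inj; rewrite /= h.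
case oBC: (oB m \in C); last first.
  apply/eqP; rewrite eqEsubset; apply/andP; split; apply/subsetP => z; rewrite !inE.
    move=> zC; case/or3P: (sub3 z zC) => [->|->|/eqP e] //; first by rewrite orbT.
    by rewrite e oBC in zC.
  by case/orP => /eqP ->.
case bB: (b == oB m).
  apply/eqP; rewrite eqEsubset; apply/andP; split; apply/subsetP => z; rewrite !inE.
    move=> zC; case/or3P: (sub3 z zC) => [->|->|/eqP e] //; first by rewrite orbT.
    by rewrite e (eqP bB) eqxx orbT.
  by case/orP => /eqP ->.
exfalso.
have e : C = oB m |: [set a; b].
  apply/eqP; rewrite eqEsubset; apply/andP; split; apply/subsetP => z; rewrite !inE.
    move=> zC; case/or3P: (sub3 z zC) => [->|->|->]; by rewrite ?orbT.
  by case/or3P => /eqP ->.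
move: evC; rewrite e cardsU1 cards2 ab' !inE (eq_sym (oB m) b) bB orbF.
have -> : (oB m == a) = false.
  apply/negbTE/eqP => /(congr1 val); rewrite /= => h; lia.
by [].
Qed.

Ltac ordneq := apply/negbTE/eqP => /(congr1 val); rewrite /= ?val_o0 ?val_o1 ?val_oA ?val_oB; lia.

Lemma set2_neq n (u v u' v' z : 'I_n) : z \in [set u; v] -> z \notin [set u'; v'] ->
  ([set u; v] == [set u'; v']) = false.
Proof. move=> h1 h2; apply/negbTE/eqP => e; move: h2; by rewrite -e h1. Qed.

Section Six.
Variable m : nat.
Let a0 := o0 m. Let a1 := o1 m. Let aA := oA m. Let aB := oB m.
Fact n01 : (a0 == a1) = false. Proof. ordneq. Qed.
Fact n0B : (a0 == aB) = false. Proof. ordneq. Qed.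
Fact n1B : (a1 == aB) = false. Proof. ordneq. Qed.
Fact n10 : (a1 == a0) = false. Proof. ordneq. Qed.
Fact nB0 : (aB == a0) = false. Proof. ordneq. Qed.
Fact nB1 : (aB == a1) = false. Proof. ordneq. Qed.

Lemma six_edges e : (e \in cycle_edges (six m)) =
  (e \in [:: (a0, [set a0; a1]); (a1, [set a0; a1]); (a1, [set a1; aB]); (aB, [set a1; aB]);
            (aB, [set a0; aB]); (a0, [set a0; aB])]).
Proof.
have s1 : ([set a1; aB] == [set a0; a1]) = false.
  by apply: (set2_neq (z := aB)); rewrite !inE ?eqxx ?orbT ?nB0 ?nB1.
have s2 : ([set a0; aB] == [set a0; a1]) = false.
  by apply: (set2_neq (z := aB)); rewrite !inE ?eqxx ?orbT ?nB0 ?nB1.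
have s3 : ([set a0; aB] == [set a1; aB]) = false.
  by apply: (set2_neq (z := a0)); rewrite !inE ?eqxx ?orbT ?n01 ?n0B.
rewrite /cycle_edges inE /six /next /= !eqxx !eq_inl !eq_inr -/a0 -/a1 -/aB
  ?n01 ?n0B ?n1B ?n10 ?nB0 ?nB1 ?s1 ?s2 ?s3 /=.
by rewrite !joins_lr !joins_rl !inE orbF.
Qed.
End Six.

Lemma set2_Csets n (u v : 'I_n) : u != v -> [set u; v] \in Csets n.
Proof. by move=> uv; rewrite inE cards2 uv. Qed.

Section Six2.
Variable m : nat.
Let a0 := o0 m. Let a1 := o1 m. Let aA := oA m. Let aB := oB m.

Lemma six_simple : simple_cycle (six m).
Proof.
have s1 : ([set a1; aB] == [set a0; a1]) = false.
  by apply: (set2_neq (z := aB)); rewrite !inE ?eqxx ?orbT ?nB0 ?nB1.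
have s2 : ([set a0; aB] == [set a0; a1]) = false.
  by apply: (set2_neq (z := aB)); rewrite !inE ?eqxx ?orbT ?nB0 ?nB1.
have s3 : ([set a0; aB] == [set a1; aB]) = false.
  by apply: (set2_neq (z := a0)); rewrite !inE ?eqxx ?orbT ?n01 ?n0B.
rewrite /simple_cycle /six /= !in_cons in_nil !eq_inl !eq_inr ?eq_lr ?eq_rl -/a0 -/a1 -/aB
  ?n01 ?n0B ?n1B ?n10 ?nB0 ?nB1 ?s1 ?s2 ?s3 ?(eq_sym [set a0; a1]) ?(eq_sym [set a1; aB]) ?s1 ?s2 ?s3 /=.
rewrite !set2_Csets ?n01 ?n0B ?n1B //= !inE !eqxx ?orbT //=.
by rewrite eq_sym s1.
Qed.
End Six2.

Section Eight.
Variable p : nat.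
Let m := p.+1.
Let a0 := o0 m. Let a1 := o1 m. Let aA := oA m. Let aB := oB m.

Lemma ordE n (x y : 'I_n) : (x == y) = (nat_of_ord x == nat_of_ord y).
Proof. by []. Qed.

Ltac oc := rewrite /a0 /a1 /aA /aB ?ordE ?val_o0 ?val_o1 ?val_oA ?val_oB /=;
  rewrite ?(ltn_eqF (ltnSn _)) ?(gtn_eqF (ltnSn _)) //.

Ltac setneq := first
  [ solve [apply: (set2_neq (z := a0)); rewrite !inE; oc]
  | solve [apply: (set2_neq (z := a1)); rewrite !inE; oc]
  | solve [apply: (set2_neq (z := aA)); rewrite !inE; oc]
  | solve [apply: (set2_neq (z := aB)); rewrite !inE; oc] ].

Let S1 := [set a0; aA]. Let S2 := [set a1; aA]. Let S3 := [set a1; aB]. Let S4 := [set a0; aB].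
Fact s12 : (S1 == S2) = false. Proof. setneq. Qed.
Fact s13 : (S1 == S3) = false. Proof. setneq. Qed.
Fact s14 : (S1 == S4) = false. Proof. setneq. Qed.
Fact s23 : (S2 == S3) = false. Proof. setneq. Qed.
Fact s24 : (S2 == S4) = false. Proof. setneq. Qed.
Fact s34 : (S3 == S4) = false. Proof. setneq. Qed.
Fact s21 : (S2 == S1) = false. Proof. by rewrite eq_sym s12. Qed.
Fact s31 : (S3 == S1) = false. Proof. by rewrite eq_sym s13. Qed.
Fact s41 : (S4 == S1) = false. Proof. by rewrite eq_sym s14. Qed.
Fact s32 : (S3 == S2) = false. Proof. by rewrite eq_sym s23. Qed.
Fact s42 : (S4 == S2) = false. Proof. by rewrite eq_sym s24. Qed.
Fact s43 : (S4 == S3) = false. Proof. by rewrite eq_sym s34. Qed.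

Lemma eight_edges e : (e \in cycle_edges (eight m)) =
  (e \in [:: (a0, S1); (aA, S1); (aA, S2); (a1, S2); (a1, S3); (aB, S3); (aB, S4); (a0, S4)]).
Proof.
rewrite /cycle_edges inE /eight /next /= !eqxx !eq_inl !eq_inr -/a0 -/a1 -/aA -/aB
  -/S1 -/S2 -/S3 -/S4 ?s12 ?s13 ?s14 ?s23 ?s24 ?s34 ?s21 ?s31 ?s41 ?s32 ?s42 ?s43.
oc. by rewrite !joins_lr !joins_rl !inE orbF.
Qed.

Lemma eight_simple : simple_cycle (eight m).
Proof.
rewrite /simple_cycle /eight /= !in_cons in_nil !eq_inl !eq_inr ?eq_lr ?eq_rl -/a0 -/a1 -/aA -/aB
  -/S1 -/S2 -/S3 -/S4 ?s12 ?s13 ?s14 ?s23 ?s24 ?s34 ?s21 ?s31 ?s41 ?s32 ?s42 ?s43.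
rewrite !set2_Csets; try by oc.
rewrite !inE !eqxx ?orbT /=. oc.
Qed.
End Eight.

Lemma cycX_simple m : simple_cycle (cycX m).
Proof. rewrite /cycX; case: m => [|p] /=; [exact: six_simple | exact: eight_simple]. Qed.

Lemma a_cases m (a : 'I_m.+3) : a <= 1 -> a = o0 m \/ a = o1 m.
Proof.
move=> h; case: (posnP a) => [a0|a0]; [left|right]; apply/val_inj;
  rewrite /= ?val_o0 ?val_o1; lia.
Qed.

Lemma b_cases m (b : 'I_m.+3) : m.+1 <= b -> b = oA m \/ b = oB m.
Proof.
move=> h; have := ltn_ord b; case: (ltngtP b m.+1) => [bm|bm|bm] hb.
- lia.
- right; apply/val_inj; rewrite /= ?val_oB; lia.
- left; apply/val_inj; rewrite /= ?val_oA; lia.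
Qed.

Lemma cycX_in0 (a b x : 'I_3) : a <= 1 -> 1 <= b -> a < b -> (x == a) || (x == b) ->
  (x, [set a; b]) \in cycle_edges (cycX 0).
Proof.
move=> ha hb ab hx; rewrite /cycX /= six_edges.
case: (a_cases ha) => ? ; subst a; case: (b_cases hb) => ?; subst b;
  case/orP: hx => /eqP ?; subst x.
all: try (have E : oA 0 = o1 0 by apply/val_inj; rewrite /= ?val_oA ?val_o1).
all: try rewrite E.
all: try by rewrite !inE !eqxx ?orbT.
all: by move: ab; rewrite ?val_o1 ?val_oA.
Qed.

Lemma cycX_inS p (a b x : 'I_p.+4) : a <= 1 -> p.+2 <= b -> a < b -> (x == a) || (x == b) ->
  (x, [set a; b]) \in cycle_edges (cycX p.+1).
Proof.
move=> ha hb ab hx; rewrite /cycX /= eight_edges.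
case: (a_cases ha) => ? ; subst a; case: (b_cases hb) => ?; subst b;
  case/orP: hx => /eqP ?; subst x.
all: by rewrite !inE !eqxx ?orbT.
Qed.

Lemma cycX_in m (a b x : 'I_m.+3) : a <= 1 -> m.+1 <= b -> a < b -> (x == a) || (x == b) ->
  (x, [set a; b]) \in cycle_edges (cycX m).
Proof. case: m a b x => [|p] a b x; [exact: cycX_in0 | exact: cycX_inS]. Qed.


Lemma part_set2 n (a b : 'I_n) : a < b -> part [set a; b] a b.
Proof.
move=> ab; apply/and5P; split; rewrite ?inE ?eqxx ?orbT //.
  apply/forall_inP => z; rewrite !inE => /orP[]/eqP ->; rewrite ?ltnn ?andbF //.
have -> : below [set a; b] a = set0.
  apply/setP => z; rewrite !inE; apply/negbTE/negP => /andP[/orP[]/eqP -> h].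
    by rewrite ltnn in h.
  have := ltn_trans ab h; by rewrite ltnn.
by rewrite cards0.
Qed.

Lemma exc_pair m (a b x : 'I_m.+3) : a <= 1 -> m.+1 <= b -> a < b -> (x == a) || (x == b) ->
  cyc m (x, [set a; b]) = cycX m.
Proof.
move=> ha hb ab hx; rewrite (cyc_part (part_set2 ab) hx) /cycab.
rewrite ltnNge hb /= ltnNge ha. by [].
Qed.

Lemma inP_cons (T : eqType) (P : T -> Prop) x s :
  P x -> {in s, forall y, P y} -> {in x :: s, forall y, P y}.
Proof. by move=> h1 h2 y; rewrite in_cons => /orP[/eqP ->|/h2]. Qed.

Lemma inP_nil (T : eqType) (P : T -> Prop) : {in [::], forall y : T, P y}.
Proof. by []. Qed.

Lemma cycX_canon m e : e \in cycle_edges (cycX m) -> cyc m e = cycX m.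
Proof.
case: m e => [|p] e.
- rewrite /cycX /= six_edges; move: e.
  repeat (apply: inP_cons; first by apply: exc_pair;
    rewrite ?val_o0 ?val_o1 ?val_oB ?eqxx ?orbT).
  exact: inP_nil.
- rewrite /cycX /= eight_edges; move: e.
  repeat (apply: inP_cons; first by apply: exc_pair;
    rewrite ?val_o0 ?val_o1 ?val_oA ?val_oB ?eqxx ?orbT).
  exact: inP_nil.
Qed.

Lemma cycab_good m (C : {set 'I_m.+3}) (a b : 'I_m.+3) : part C a b -> C \in Csets m.+3 ->
 [/\ simple_cycle (cycab m a b C),
     forall x, (x == a) || (x == b) -> (x, C) \in cycle_edges (cycab m a b C),
     forall e, e \in cycle_edges (cycab m a b C) -> cyc m e = cycab m a b C
   & size (cycab m a b C) <= (if m == 0 then 6 else 8)].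
Proof.
move=> p CC.
have ab : a != b by case/and5P: p => _ _ h _ _; apply/eqP => e; rewrite e ltnn in h.
rewrite /cycab; case: ifP => r1.
  have p1 := rule1_part r1 p.
  have kT : oB m \in T1 m by rewrite !inE eqxx orbT.
  have E1 : tog C (T1 m) \in Csets m.+3.
    case/and5P: (p1) => h1 h2 _ _ _; exact: Csets_tog CC (T1_odd m) h1 h2 ab.
  split.
  - exact: c4_simple.
  - move=> x hx; exact: c4_in.
  - move=> e /(c4_edges kT p p1) [x' [C' [-> hx hC]]].
    case: hC => ->.
      by rewrite (cyc_part p hx) /cycab r1.
    by rewrite (cyc_part p1 hx) /cycab r1 c4_tog.
  - by case: (m == 0).
case: ifP => r0.
  have p1 := rule0_part r0 p.
  have kT : o0 m \in T0 m by rewrite !inE eqxx.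
  have E1 : tog C (T0 m) \in Csets m.+3.
    case/and5P: (p1) => h1 h2 _ _ _; exact: Csets_tog CC (T0_odd m) h1 h2 ab.
  split.
  - exact: c4_simple.
  - move=> x hx; exact: c4_in.
  - move=> e /(c4_edges kT p p1) [x' [C' [-> hx hC]]].
    case: hC => ->.
      by rewrite (cyc_part p hx) /cycab r1 r0.
    by rewrite (cyc_part p1 hx) /cycab r1 r0 c4_tog.
  - by case: (m == 0).
have ha : a <= 1 by rewrite leqNgt r0.
have hb : m.+1 <= b by rewrite leqNgt r1.
have ab' : a < b by case/and5P: p.
have evC : ~~ odd #|C| by move: CC; rewrite inE => /andP[].
have eC := exc_set p evC ha hb.
split.
- exact: cycX_simple.
- move=> x hx; rewrite eC; exact: cycX_in.
- move=> e; exact: cycX_canon.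
- by rewrite /cycX; case: (m == 0).
Qed.

Lemma dtotE n : dtot n = #|Gedges n|.
Proof.
rewrite -sum1_card big_mkcond /=.
have -> : \sum_(p : edge n) (if p \in Gedges n then 1 else 0) =
   \sum_(x : 'I_n) \sum_(C : {set 'I_n}) (if (C \in Csets n) && (x \in C) then 1 else 0).
  rewrite pair_big /=; apply: eq_bigr => [[x C]] _; by rewrite inE.
rewrite exchange_big /dtot big_mkcond /=; apply: eq_bigr => C _.
case: (C \in Csets n) => /=; last by rewrite big1.
by rewrite -sum1_card big_mkcond.
Qed.

Lemma mem_bigcup_seq (T : finType) (I : eqType) (r : seq I) (F : I -> {set T}) x :
  (x \in \bigcup_(i <- r) F i) = has (fun i => x \in F i) r.
Proof.
elim: r => [|i r IH]; first by rewrite big_nil inE.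
by rewrite big_cons inE IH.
Qed.

Lemma card_bigcup_seq (T : finType) (I : eqType) (r : seq I) (F : I -> {set T}) :
  uniq r -> (forall s t, s \in r -> t \in r -> s != t -> [disjoint F s & F t]) ->
  #|\bigcup_(s <- r) F s| = \sum_(s <- r) #|F s|.
Proof.
elim: r => [|i r IH]; first by rewrite !big_nil cards0.
rewrite /= => /andP[ir ur] hd.
rewrite big_cons big_cons -IH //; last first.
  by move=> s t sr tr st; apply: hd => //; rewrite in_cons ?sr ?tr orbT.
have := cardsU (F i) (\bigcup_(s <- r) F s).
have -> : F i :&: \bigcup_(s <- r) F s = set0.
  apply/setP => x; rewrite !inE mem_bigcup_seq; apply/negbTE/andP => [[xi /hasP[s sr xs]]].
  have : [disjoint F i & F s].
    apply: hd; rewrite ?in_cons ?eqxx ?sr ?orbT //.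
    by apply/eqP => e; rewrite e sr in ir.
  rewrite -setI_eq0 => /eqP/setP/(_ x); by rewrite !inE xi xs.
by rewrite cards0 subn0.
Qed.

Lemma sum_le_const (I : eqType) (r : seq I) (g : I -> nat) (L : nat) :
  (forall s, s \in r -> g s <= L) -> \sum_(s <- r) g s <= L * size r.
Proof.
elim: r => [|i r IH] h; first by rewrite big_nil.
rewrite big_cons /= mulnS; apply: leq_add; first by apply: h; rewrite in_cons eqxx.
by apply: IH => s sr; apply: h; rewrite in_cons sr orbT.
Qed.

Lemma sum_sq_le (I : eqType) (r : seq I) (g : I -> nat) (L : nat) :
  (forall s, s \in r -> g s <= L) -> \sum_(s <- r) g s ^ 2 <= L * \sum_(s <- r) g s.
Proof.
elim: r => [|i r IH] h; first by rewrite !big_nil.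
rewrite !big_cons mulnDr; apply: leq_add.
  rewrite (_ : g i ^ 2 = g i * g i); last by rewrite /= Nat.mul_1_r.
  by rewrite leq_mul2r h ?orbT // in_cons eqxx.
by apply: IH => s sr; apply: h; rewrite in_cons sr orbT.
Qed.

Lemma ce_sub n (s : seq (vert n)) e : simple_cycle s -> e \in cycle_edges s -> e \in Gedges n.
Proof.
case/and3P => _ _ cs; rewrite inE => /hasP[v vs hj].
have ha := next_cycle cs vs.
move: (next s v) hj ha => w; case: e => x C.
case: v {vs} => [y|D]; case: w => [z|E] //=; rewrite ?joins_lr ?joins_rl.
- by move=> /eqP[-> ->] /andP[h1 h2]; rewrite inE /= h1 h2.
- by move=> /eqP[-> ->] /andP[h1 h2]; rewrite inE /= h1 h2.
Qed.

Lemma framework n (f : edge n -> seq (vert n)) (L : nat) :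
 (forall e, e \in Gedges n -> [/\ simple_cycle (f e), e \in cycle_edges (f e),
    (forall e', e' \in cycle_edges (f e) -> f e' = f e) & clen (f e) <= L]) ->
 exists sigma : seq (seq (vert n)), [/\ cycle_decomposition sigma, (dtot n <= L * size sigma)%N
    & (\sum_(s <- sigma) clen s ^ 2 <= L * dtot n)%N].
Proof.
move=> H.
set sigma := undup [seq f e | e <- enum (Gedges n)].
have memS : forall s, s \in sigma -> exists2 e, e \in Gedges n & s = f e.
  move=> s; rewrite mem_undup => /mapP[e]; rewrite mem_enum => eG ->; by exists e.
have fS : forall e, e \in Gedges n -> f e \in sigma.
  by move=> e eG; rewrite mem_undup; apply/mapP; exists e; rewrite ?mem_enum.
have us : uniq sigma by apply: undup_uniq.
have disj : forall s t, s \in sigma -> t \in sigma -> s != t ->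
    [disjoint cycle_edges s & cycle_edges t].
  move=> s t /memS[e eG ->] /memS[e' eG' ->] st.
  rewrite -setI_eq0; apply/eqP/setP => x; rewrite in_setI in_set0; apply/negbTE/andP => [[h1 h2]].
  have [_ _ h _] := H e eG; have [_ _ h' _] := H e' eG'.
  by move: st; rewrite -(h x h1) -(h' x h2) eqxx.
have cover : \bigcup_(s <- sigma) cycle_edges s = Gedges n.
  apply/setP => e; rewrite mem_bigcup_seq; apply/hasP/idP.
    move=> [s /memS[e0 e0G ->] he]; have [sc _ _ _] := H e0 e0G.
    exact: ce_sub sc he.
  move=> eG; exists (f e); first exact: fS.
  by have [] := H e eG.
have cardE : dtot n = \sum_(s <- sigma) clen s.
  by rewrite dtotE -cover card_bigcup_seq.
have clenL : forall s, s \in sigma -> clen s <= L.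
  by move=> s /memS[e eG ->]; have [] := H e eG.
exists sigma; split.
- split.
  + by move=> s /memS[e eG ->]; have [] := H e eG.
  + move=> i j /andP[ij js].
    have is_ : i < size sigma by exact: ltn_trans ij js.
    apply: disj; rewrite ?mem_nth //.
    by rewrite nth_uniq // (ltn_eqF ij).
  + exact: cover.
- by rewrite cardE; apply: sum_le_const.
- by rewrite cardE; apply: sum_sq_le.
Qed.

Lemma joins_det n (e e' : edge n) v w : joins e v w -> joins e' v w -> e = e'.
Proof.
case: e => x C; case: e' => x' C'.
case: v => [y|D]; case: w => [z|E]; rewrite ?joins_lr ?joins_rl.
- by rewrite /joins /= ?eq_lr ?eq_rl ?andbF.
- by move=> /eqP[-> ->] /eqP[-> ->].
- by move=> /eqP[-> ->] /eqP[-> ->].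
- by rewrite /joins /= ?eq_lr ?eq_rl ?andbF.
Qed.

Lemma clen_size n (s : seq (vert n)) : clen s <= size s.
Proof.
pose h (e : edge n) : option (vert n) := [pick v | (v \in s) && joins e v (next s v)].
have hS : forall e, e \in cycle_edges s -> exists2 v, h e = Some v & (v \in s) && joins e v (next s v).
  move=> e; rewrite inE => /hasP[v vs hv]; rewrite /h; case: pickP => [v' hv'|/(_ v)].
    by exists v'.
  by rewrite vs hv.
have inj : {in cycle_edges s &, injective h}.
  move=> e e' /hS[v hv /andP[_ j1]] /hS[v' hv' /andP[_ j2]] E.
  rewrite hv hv' in E; case: E => E; rewrite -E in j2.
  exact: joins_det j1 j2.
rewrite /clen -(card_in_imset inj).
apply: (@leq_trans #|[set Some v | v in s]|).
  apply: subset_leq_card; apply/subsetP => o /imsetP[e he ->].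
  case: (hS e he) => v -> /andP[vs _]; apply/imsetP; by exists v.
apply: leq_trans (leq_imset_card _ _) _.
exact: card_size.
Qed.

Lemma main_m m : exists sigma : seq (seq (vert m.+3)),
  [/\ cycle_decomposition sigma, (dtot m.+3 <= (if m == 0 then 6 else 8) * size sigma)%N
    & (\sum_(s <- sigma) clen s ^ 2 <= (if m == 0 then 6 else 8) * dtot m.+3)%N].
Proof.
apply: (framework (f := cyc m)) => -[x C] eG.
have [a [b [p hx ce]]] := cyc_Gedges eG.
have CC : C \in Csets m.+3 by move: eG; rewrite inE => /andP[].
have [G1 G2 G3 G4] := cycab_good p CC.
rewrite ce; split => //.
- exact: G2.
- exact: leq_trans (clen_size _) G4.
Qed.

Lemma div_ge (a b c : R) : (0 < c)%R -> (a * c <= b)%R -> (a <= b / c)%R.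
Proof.
move=> hc h; apply (Rmult_le_reg_r c) => //.
rewrite /Rdiv Rmult_assoc Rinv_l; lra.
Qed.

Lemma mu_le n (sigma : seq (seq (vert n))) L :
  (dtot n <= L * size sigma)%N -> (mu sigma <= INR L)%R.
Proof.
rewrite /mu => h.
case: (posnP (size sigma)) => [s0|sp].
  rewrite s0 muln0 leqn0 in h; rewrite (eqP h) s0 /= /Rdiv Rmult_0_l; exact: pos_INR.
have hs : (0 < INR (size sigma))%R by apply: lt_0_INR; apply/ltP.
rewrite /Rdiv; apply (Rmult_le_reg_r (INR (size sigma))) => //.
rewrite Rmult_assoc Rinv_l; last lra.
rewrite Rmult_1_r -mult_INR; apply: le_INR; exact/leP.
Qed.

Lemma alpha_le n (sigma : seq (seq (vert n))) L :
  (\sum_(s <- sigma) clen s ^ 2 <= L * dtot n)%N -> (alpha sigma <= INR L)%R.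
Proof.
rewrite /alpha => h.
case: (posnP (dtot n)) => [d0|dp].
  rewrite d0 muln0 leqn0 in h; rewrite (eqP h) /= Rmult_0_r; exact: pos_INR.
have hs : (0 < INR (dtot n))%R by apply: lt_0_INR; apply/ltP.
apply (Rmult_le_reg_l (INR (dtot n))) => //.
rewrite -Rmult_assoc Rinv_r; last lra.
rewrite Rmult_1_l -mult_INR Nat.mul_comm; apply: le_INR; exact/leP.
Qed.

Lemma ln_le (x y : R) : (0 < x)%R -> (x <= y)%R -> (ln x <= ln y)%R.
Proof.
move=> hx hxy; case: (Rle_lt_or_eq_dec _ _ hxy) => h.
  by apply: Rlt_le; apply: ln_increasing.
by rewrite h; apply: Rle_refl.
Qed.

Lemma ln2_pos : (0 < ln 2)%R.
Proof. rewrite -ln_1; apply: ln_increasing; lra. Qed.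

Definition Lm (m : nat) : nat := if m == 0 then 6 else 8.

Lemma Lbound (m : nat) : (INR (Lm m) <= 5 * log2 (INR m.+3))%R.
Proof.
have l2 := ln2_pos.
rewrite /log2 /Rdiv -Rmult_assoc; apply: div_ge => //.
rewrite /Lm; case: m => [|m].
- have l3 : (0 < ln 3)%R by rewrite -ln_1; apply: ln_increasing; lra.
  have h1 : ln (2 ^ 6) = (INR 6 * ln 2)%R by apply: ln_pow; lra.
  have h2 : ln (3 ^ 5) = (INR 5 * ln 3)%R by apply: ln_pow; lra.
  have h3 : (ln (2 ^ 6) <= ln (3 ^ 5))%R by apply: ln_le; simpl; lra.
  rewrite (_ : INR (if 0 == 0 then 6 else 8) = 6%R); last by simpl; lra.
  rewrite (_ : INR 3 = 3%R); last by simpl; lra.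
  rewrite h1 h2 in h3; simpl in h3; lra.
- have h1 : ln (2 ^ 2) = (INR 2 * ln 2)%R by apply: ln_pow; lra.
  have h4 : (4 <= INR m.+4)%R.
    rewrite (_ : 4%R = INR 4); last by simpl; lra.
    apply: le_INR; apply/leP; lia.
  have e4 : (2 ^ 2 = 4)%R by simpl; lra.
  have h3 : (ln (2 ^ 2) <= ln (INR m.+4))%R by rewrite e4; apply: ln_le; lra.
  rewrite (_ : INR (if m.+1 == 0 then 6 else 8) = 8%R); last by simpl; lra.
  rewrite h1 in h3; rewrite (_ : INR 2 = 2%R) in h3; [lra | by simpl; lra].
Qed.

Theorem corollary2 (n : nat) (hn : (3 <= n)%N) :
  exists sigma : seq (seq (vert n)),
    cycle_decomposition sigma /\
    (mu sigma <= 5 * log2 (INR n))%R /\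
    (alpha sigma <= 5 * log2 (INR n))%R.
Proof.
case: n hn => [|[|[|m]]] // _.
have [sigma [cd h1 h2]] := main_m m.
exists sigma; split => //; split.
- exact: Rle_trans (mu_le h1) (Lbound m).
- exact: Rle_trans (alpha_le h2) (Lbound m).
Qed.
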